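(* Let $n\ge7$ and let $T$ be a tree on $n$ vertices with $\operatorname{diam}(\mathcal{C}_3(T))=\lfloor 3n/2\rfloor$. Then $T$ is either the star $K_{1,n-1}$ or a double star $S(a,b)$ with $a,b\ge1$, $a+b+2=n$ and $|a-b|\le4$.
   Context: The double star $S(a,b)$ is the tree obtained by joining the centers of the stars $K_{1,a}$ and $K_{1,b}$ by an edge. A proper 3-coloring of a tree $T=(V,E)$ is a map $f\colon V\to\mathbb{Z}/3\mathbb{Z}$ with $f(u)\neq f(v)$ for every edge $uv\in E$. The 3-coloring graph $\mathcal{C}_3(T)$ has the proper 3-colorings as vertices, two colorings adjacent iff they differ at exactly one vertex; $\operatorname{diam}$ denotes graph diameter. *)

(* Defs.v *)
From mathcomp Require Import all_boot all_algebra.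
Set Implicit Arguments. Unset Strict Implicit. Unset Printing Implicit Defensive.

Definition simple_graph (T : finType) (e : rel T) : Prop :=
  (forall x, ~~ e x x) /\ (forall x y, e x y = e y x).

Definition edge_set (T : finType) (e : rel T) : {set {set T}} :=
  [set [set x; y] | x in T, y in T & e x y].

Definition is_tree (T : finType) (e : rel T) : Prop :=
  simple_graph e /\ (forall x y, connect e x y) /\ #|edge_set e| = #|T| - 1.

Definition proper3 (T : finType) (e : rel T) (f : {ffun T -> 'Z_3}) : Prop :=
  forall u v, e u v -> f u != f v.

Definition col_adj (T : finType) (e : rel T) (f g : {ffun T -> 'Z_3}) : Prop :=
  proper3 e f /\ proper3 e g /\ #|[set v | f v != g v]| = 1.

Fixpoint walk (T : finType) (e : rel T) (k : nat) (f g : {ffun T -> 'Z_3}) : Prop :=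
  match k with
  | 0 => f = g
  | k'.+1 => exists h, walk e k' f h /\ col_adj e h g
  end.

Definition col_diam_eq (T : finType) (e : rel T) (d : nat) : Prop :=
  (forall f g, proper3 e f -> proper3 e g -> exists2 j, j <= d & walk e j f g) /\
  (exists f g, [/\ proper3 e f, proper3 e g & forall j, j < d -> ~ walk e j f g]).

Definition is_star (T : finType) (e : rel T) : Prop :=
  exists c : T, forall x y,
    e x y = ((x == c) && (y != c)) || ((y == c) && (x != c)).

(* T is (isomorphic to) the double star S(a,b): adjacent centers u, v; the a
   vertices with p true are the leaves at u, the b others are leaves at v. *)
Definition is_double_star (T : finType) (e : rel T) (a b : nat) : Prop :=
  exists (u v : T) (p : pred T),
    [/\ u != v,
        #|[set x | [&& x != u, x != v & p x]]| = a,
        #|[set x | [&& x != u, x != v & ~~ p x]]| = b &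
        forall x y, e x y =
          [|| (x == u) && (y == v), (x == v) && (y == u),
              (x == u) && [&& y != u, y != v & p y],
              (y == u) && [&& x != u, x != v & p x],
              (x == v) && [&& y != u, y != v & ~~ p y]
            | (y == v) && [&& x != u, x != v & ~~ p x]]].

(* Main.v *)
Require Import Defs.
From mathcomp Require Import all_boot all_order all_algebra.
From mathcomp Require Import zify.
Set Implicit Arguments. Unset Strict Implicit. Unset Printing Implicit Defensive.

Module M1.

Section Dist.
Variables (T : finType) (e : rel T).
Hypothesis esym : forall x y, e x y = e y x.
Hypothesis eirr : forall x, ~~ e x x.
Hypothesis econn : forall x y, connect e x y.

Fixpoint reach (k : nat) (r v : T) : bool :=
  if k is k'.+1 then reach k' r v || [exists w, reach k' r w && e w v] else r == v.

Lemma reachS k r v : reach k r v -> reach k.+1 r v.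
Proof. by move=> h /=; rewrite h. Qed.

Lemma reach_mono k m r v : k <= m -> reach k r v -> reach m r v.
Proof.
move=> /subnK <-; elim: (m - k) => [//|d IH] h.
by rewrite addSn; apply: reachS; apply: IH.
Qed.

Lemma reach_edge k r w v : reach k r w -> e w v -> reach k.+1 r v.
Proof. move=> h1 h2 /=; apply/orP; right; apply/existsP; exists w; by rewrite h1. Qed.

Lemma reach_ex r v : exists k, reach k r v.
Proof.
have /connectP [p pth ->] := econn r v.
exists (size p); elim/last_ind: p pth => [|p x IH] //=.
rewrite rcons_path => /andP [h1 h2]; rewrite size_rcons last_rcons.
exact: reach_edge (IH h1) h2.
Qed.

Definition dist r v := ex_minn (reach_ex r v).

Lemma dist_reach r v : reach (dist r v) r v.
Proof. by rewrite /dist; case: ex_minnP. Qed.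

Lemma dist_min k r v : reach k r v -> dist r v <= k.
Proof. by rewrite /dist; case: ex_minnP => m _ H /H. Qed.

Lemma dist0 r v : (dist r v == 0) = (r == v).
Proof.
apply/idP/idP.
  by move=> /eqP h; have := dist_reach r v; rewrite h.
by move=> h; have := dist_min (k := 0) (r:=r) (v:=v) h; rewrite leqn0.
Qed.

Lemma dist_rr r : dist r r = 0.
Proof. by apply/eqP; rewrite dist0. Qed.

Lemma dist_edge r w v : e w v -> dist r v <= (dist r w).+1.
Proof. by move=> h; apply: dist_min; apply: reach_edge h; apply: dist_reach. Qed.

Lemma dist_closer r v : r != v -> exists2 w, e w v & (dist r w).+1 = dist r v.
Proof.
move=> rv; have := dist_reach r v.
case E: (dist r v) => [|k].
  by move/eqP: E; rewrite dist0 (negbTE rv).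
move=> /= /orP [h|/existsP [w /andP [h1 h2]]].
  by have := dist_min h; rewrite E ltnn.
exists w => //; have := dist_min h1; have := dist_edge r h2; rewrite E.
move=> a b; apply/eqP; rewrite eqSS eqn_leq b /=; by rewrite -ltnS.
Qed.

Lemma reach_prepend k a b c : e a b -> reach k b c -> reach k.+1 a c.
Proof.
move=> hab; elim: k c => [|k IH] c /=.
  move=> /eqP <-; apply/orP; right; apply/existsP; exists a; by rewrite eqxx.
move=> /orP [h|/existsP [w /andP [h1 h2]]].
  by apply/orP; left; apply: IH.
exact: reach_edge (IH _ h1) h2.
Qed.

Lemma reach_sym k r v : reach k r v -> reach k v r.
Proof.
elim: k r v => [|k IH] r v /=; first by rewrite eq_sym.
move=> /orP [h|/existsP [w /andP [h1 h2]]].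
  by rewrite IH.
have := reach_prepend (a := v) (b := w) (k := k) (c := r).
rewrite esym => H; exact: H h2 (IH _ _ h1).
Qed.

Lemma dist_sym r v : dist r v = dist v r.
Proof.
apply/eqP; rewrite eqn_leq; apply/andP; split; apply: dist_min; apply: reach_sym; exact: dist_reach.
Qed.

Lemma dist_le1 r v : dist r v <= 1 -> (r == v) || e r v.
Proof.
move=> h; have := reach_mono h (dist_reach r v) => /= /orP [->//|/existsP [w /andP [h1 h2]]].
by move: h1 => /eqP ->; rewrite h2 orbT.
Qed.

Lemma dist_adj r v : e r v -> dist r v = 1.
Proof.
move=> h; apply/eqP; rewrite eqn_leq; have := dist_edge r h; rewrite dist_rr => -> /=.
rewrite lt0n dist0; apply/eqP => E; by move: h; rewrite E (negbTE (eirr v)).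
Qed.

End Dist.

Section Tri.
Variables (T : finType) (e : rel T).
Hypothesis econn : forall x y, connect e x y.
Lemma reach_cat k1 k2 a b c : reach e k1 a b -> reach e k2 b c -> reach e (k1 + k2) a c.
Proof.
move=> h1; elim: k2 c => [|k IH] c /=; first by move=> /eqP <-; rewrite addn0.
rewrite addnS => /orP [h|/existsP [w /andP [h2 h3]]].
  by apply: reachS; apply: IH.
exact: reach_edge (IH _ h2) h3.
Qed.
Lemma dist_tri a b c : dist econn a c <= dist econn a b + dist econn b c.
Proof. apply: dist_min; apply: reach_cat; apply: dist_reach. Qed.
End Tri.

End M1.
Import M1.

Module M2.

Lemma mem_edge (T : finType) (e : rel T) x y : e x y -> [set x; y] \in edge_set e.
Proof. move=> h; apply/imset2P; exists x y => //; by rewrite inE. Qed.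

Lemma edge_setP (T : finType) (e : rel T) A : A \in edge_set e -> exists x y, e x y /\ A = [set x; y].
Proof. move=> /imset2P [x y _]; rewrite inE => h ->; by exists x, y. Qed.

Lemma set2_eq (T : finType) (a b c d : T) : [set a; b] = [set c; d] -> (a = c /\ b = d) \/ (a = d /\ b = c).
Proof.
move=> E.
have ha : a \in [set c; d] by rewrite -E !inE eqxx.
have hb : b \in [set c; d] by rewrite -E !inE eqxx orbT.
have hc : c \in [set a; b] by rewrite E !inE eqxx.
have hd : d \in [set a; b] by rewrite E !inE eqxx orbT.
move: ha hb hc hd; rewrite !inE.
case/orP=> /eqP ha; case/orP=> /eqP hb; subst a b.
- by move=> _ /orP [] /eqP hd; subst; left.
- by left.
- by right.
- by move=> /orP [] /eqP hc _; subst; left.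
Qed.

Section Tree.
Variables (T : finType) (e : rel T).
Hypothesis esym : forall x y, e x y = e y x.
Hypothesis eirr : forall x, ~~ e x x.
Hypothesis econn : forall x y, connect e x y.
Hypothesis ecount : #|edge_set e| = #|T| - 1.

Local Notation dist := (dist econn).

Definition par r v := odflt v [pick w | e w v && (dist r w < dist r v)].

Lemma par_spec r v : r != v -> e (par r v) v /\ dist r (par r v) < dist r v.
Proof.
move=> rv; rewrite /par; case: pickP => [w /andP [h1 h2]|H] //=.
have [w h1 h2] := dist_closer econn rv.
by have := H w; rewrite h1 -h2 ltnSn.
Qed.

Lemma par_image r : [set [set v; par r v] | v in [set~ r]] = edge_set e.
Proof.
apply/eqP; rewrite eqEcard; apply/andP; split.
  apply/subsetP => A /imsetP [v]; rewrite in_setC1 => rv ->.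
  rewrite eq_sym in rv; have [h1 _] := par_spec rv; rewrite setUC; exact: (mem_edge h1).
rewrite ecount card_in_imset; first by rewrite cardsC1 subn1.
move=> v w; rewrite !in_setC1 => rv rw E; rewrite eq_sym in rv; rewrite eq_sym in rw.
case: (set2_eq E) => [[]//|[h1 h2]].
have [_ a1] := par_spec rv; have [_ a2] := par_spec rw.
by move: a1 a2; rewrite h2 -h1; lia.
Qed.

Lemma edge_par r a b : e a b -> exists2 v, r != v & [set a; b] = [set v; par r v].
Proof.
move=> h; have := mem_edge h; rewrite -(par_image r) => /imsetP [v]; rewrite in_setC1 eq_sym => rv E.
by exists v.
Qed.

Lemma dist_neq r a b : e a b -> dist r a != dist r b.
Proof.
move=> h; have [v rv E] := edge_par r h; have [_ lt] := par_spec rv.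
case: (set2_eq E) => [[-> ->]|[-> ->]]; rewrite neq_ltn lt ?orbT //.
Qed.

Lemma dist_edge2 r a b : e a b -> dist r b = (dist r a).+1 \/ dist r a = (dist r b).+1.
Proof.
move=> h; have h1 := dist_edge econn r h; have h2 := dist_edge econn r (w:=b) (v:=a).
rewrite esym in h2; have h3 := dist_neq r h; move: (h2 h) h1 h3; lia.
Qed.

Lemma closer_uniq r v w1 w2 : e w1 v -> e w2 v -> dist r w1 < dist r v -> dist r w2 < dist r v -> w1 = w2.
Proof.
suff H : forall w, e w v -> dist r w < dist r v -> w = par r v.
  by move=> a b c d; rewrite (H _ a c) (H _ b d).
move=> w h lt; have [u ru E] := edge_par r h; have [_ lt2] := par_spec ru.
case: (set2_eq E) => [[h1 h2]|[h1 h2]]; subst => //.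
by move: (ltn_trans lt2 lt); rewrite ltnn.
Qed.

End Tree.

End M2.
Import M2.

Module M3.
Import Order.TTheory GRing.Theory Num.Theory.
Local Open Scope ring_scope.

Definition zcol (h : int) : 'Z_3 := inZp (absz (h %% 3)%Z).

Lemma zcol_val h : (val (zcol h) : int) = (h %% 3)%Z.
Proof. rewrite /zcol /=; change (Zp_trunc 3).+2 with 3%N. lia. Qed.

Lemma eq_zcol (x : 'Z_3) h : (x == zcol h) = ((val x : int) == (h %% 3)%Z).
Proof.
rewrite -zcol_val; apply/eqP/eqP => [->//|E]; apply: val_inj => /=.
by move: E => [->].
Qed.

Lemma zcol_eq a b : (zcol a == zcol b) = ((a %% 3)%Z == (b %% 3)%Z).
Proof. by rewrite eq_zcol zcol_val. Qed.

Lemma zp3_bound (x : 'Z_3) : 0 <= (val x : int) < 3.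
Proof. by case: x => [[|[|[|m]]] //]. Qed.

Section Heights.
Variables (T : finType) (e : rel T).
Hypothesis esym : forall x y, e x y = e y x.
Hypothesis eirr : forall x, ~~ e x x.
Hypothesis hasnb : forall v, exists w, e v w.

Definition hgt (f : {ffun T -> 'Z_3}) (H : T -> int) :=
  (forall v, f v = zcol (H v)) /\ (forall u v, e u v -> `|H u - H v| = 1).

Lemma hgt_proper f H : hgt f H -> proper3 e f.
Proof. move=> [hf hH] u v huv; rewrite !hf zcol_eq; have := hH _ _ huv; lia. Qed.

Lemma hgt_step f g H : col_adj e f g -> hgt f H ->
  exists H', [/\ hgt g H', \sum_v `|H' v - H v| = 2 & forall v, ((H' v - H v) %% 2)%Z = 0].
Proof.
case=> pf [pg /eqP/cards1P [v0 Hv0]] [hf hH].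
have hdiff v : v != v0 -> f v = g v.
  move=> nv; apply/eqP; apply: contraNT nv => nf.
  have: v \in [set v | f v != g v] by rewrite inE.
  by rewrite Hv0 inE.
have hv0 : f v0 != g v0.
  have: v0 \in [set v | f v != g v] by rewrite Hv0 set11.
  by rewrite inE.
have [w0 hw0] := hasnb v0.
have nw0 : w0 != v0 by apply/eqP => E; move: hw0; rewrite E (negbTE (eirr v0)).
pose H' := fun v => if v == v0 then 2 * H w0 - H v0 else H v.
have A : (val (g v0) : int) = ((2 * H w0 - H v0) %% 3)%Z.
  have := zp3_bound (g v0).
  have := hH _ _ hw0.
  have := pg _ _ hw0; rewrite -(hdiff _ nw0) hf eq_zcol.
  move: hv0; rewrite hf eq_sym eq_zcol.
  lia.
have gv0 : g v0 = zcol (H' v0) by rewrite /H' eqxx; apply/eqP; rewrite eq_zcol A.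
have nbv b : e v0 b -> H b = H w0.
  move=> hb; have nb : b != v0 by apply/eqP => E; move: hb; rewrite E (negbTE (eirr v0)).
  have := pg _ _ hb; rewrite -(hdiff _ nb) hf eq_zcol A.
  have := hH _ _ hb; have := hH _ _ hw0; lia.
exists H'; split.
- split=> [v|u v huv].
    case: (eqVneq v v0) => [->//|nv].
    by rewrite -hdiff // hf /H' (negbTE nv).
  rewrite /H'; case: (eqVneq u v0) => [eu|nu]; case: (eqVneq v v0) => [ev|nv].
  + by move: huv; rewrite eu ev (negbTE (eirr v0)).
  + rewrite -eu in nbv; rewrite (nbv _ huv); have := hH _ _ hw0; rewrite -eu; lia.
  + rewrite esym ev in huv; rewrite (nbv _ huv); have := hH _ _ hw0; lia.
  + exact: hH.
- rewrite (bigD1 v0) //= big1 => [|v nv]; last by rewrite /H' (negbTE nv) subrr normr0.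
  rewrite /H' eqxx addr0; have := hH _ _ hw0; lia.
- move=> v; rewrite /H'; case: (eqVneq v v0) => [->|nv] /=; lia.
Qed.

Lemma walk_hgt k f g H0 : walk e k f g -> hgt f H0 ->
  exists H, [/\ hgt g H, \sum_v `|H v - H0 v| <= 2 * k%:Z & forall v, ((H v - H0 v) %% 2)%Z = 0].
Proof.
elim: k g => [|k IH] g /=.
  move=> -> h; exists H0; split => //; last by move=> v; rewrite subrr.
  by rewrite big1 // => v _; rewrite subrr normr0.
move=> [h [wk adj]] hf0; have [H1 [h1 s1 p1]] := IH _ wk hf0.
have [H2 [h2 s2 p2]] := hgt_step adj h1.
exists H2; split => //.
  apply: le_trans (_ : \sum_v (`|H2 v - H1 v| + `|H1 v - H0 v|) <= _).
    apply: ler_sum => v _; rewrite (_ : H2 v - H0 v = (H2 v - H1 v) + (H1 v - H0 v)); last by lia.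
    exact: ler_normD.
  rewrite big_split /= s2; apply: (le_trans (lerD (lexx 2) s1)); lia.
move=> v; have := p1 v; have := p2 v; lia.
Qed.

End Heights.

End M3.
Import M3.

Module M4.
Import Order.TTheory GRing.Theory Num.Theory.
Local Open Scope ring_scope.

Section Uniq.
Variables (T : finType) (e : rel T).
Hypothesis esym : forall x y, e x y = e y x.
Hypothesis eirr : forall x, ~~ e x x.
Hypothesis hasnb : forall v, exists w, e v w.
Hypothesis econn : forall x y, connect e x y.

Lemma hgt_uniq g H1 H2 : hgt e g H1 -> hgt e g H2 -> exists c, forall v, H1 v = H2 v + 3 * c.
Proof.
move=> [g1 e1] [g2 e2].
have m v : ((H1 v - H2 v) %% 3)%Z = 0.
  have E : zcol (H1 v) = zcol (H2 v) by rewrite -g1 -g2.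
  move/eqP: E; rewrite zcol_eq; lia.
have ed a b : e a b -> H1 a - H2 a = H1 b - H2 b.
  move=> h; have := m a; have := m b; have := e1 _ _ h; have := e2 _ _ h; lia.
case: (pickP (fun _ : T => true)) => [r _|H]; last first.
  by exists 0 => v; have := H v.
exists ((H1 r - H2 r) %/ 3)%Z => v.
have [k hk] := reach_ex econn r v.
suff : H1 r - H2 r = H1 v - H2 v by have := m r; lia.
elim: k v hk => [|k IH] v /=; first by move=> /eqP ->.
move=> /orP [/IH //|/existsP [w /andP [h1 h2]]].
by rewrite (IH _ h1) (ed _ _ h2).
Qed.

Lemma walk_bound k f g hf hg : walk e k f g -> hgt e f hf -> hgt e g hg ->
  exists c, (forall v, ((hg v + 3 * c - hf v) %% 2)%Z = 0) /\
            \sum_v `|hg v + 3 * c - hf v| <= 2 * k%:Z.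
Proof.
move=> w h1 h2; have [H [h s p]] := walk_hgt esym eirr hasnb w h1.
have [c hc] := hgt_uniq h h2.
exists c; split.
  by move=> v; have := p v; rewrite hc.
by under eq_bigr => v _ do rewrite -hc.
Qed.

End Uniq.

End M4.
Import M4.

Module M5.
Import Order.TTheory GRing.Theory Num.Theory.
Local Open Scope ring_scope.

Lemma mulz3 (m : nat) : (3 : int) *+ m = 3 * m%:Z.
Proof. elim: m => // m IH; rewrite mulrS IH; lia. Qed.

Definition clamp (x : int) : int := if x < -1 then -1 else if 4 < x then 4 else x.

Lemma clamp_bnd x : -1 <= clamp x <= 4.
Proof. rewrite /clamp; repeat case: ifP; lia. Qed.

Lemma clamp_lip x y : 0 <= y - x <= 1 -> 0 <= clamp y - clamp x <= 1.
Proof. rewrite /clamp; repeat case: ifP; lia. Qed.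

Lemma clamp_low x : x <= -1 -> clamp x = -1.
Proof. rewrite /clamp; repeat case: ifP; lia. Qed.

Lemma clamp_id x : -1 <= x <= 4 -> clamp x = x.
Proof. rewrite /clamp; repeat case: ifP; lia. Qed.

Lemma div_step (M a b : int) : 0 < M -> 0 <= b - a < M -> 0 <= (b %/ M)%Z - (a %/ M)%Z <= 1.
Proof. move=> h1 h2. have := divz_eq a M; have := divz_eq b M. have := modz_ge0 a (lt0r_neq0 h1). nia. Qed.

Lemma ivt (F : nat -> int) T0 : F 0%N <= 1 -> -1 <= F T0 ->
  (forall t, (t < T0)%N -> 0 <= F t.+1 - F t <= 2) -> exists t, (t <= T0)%N /\ -1 <= F t <= 1.
Proof.
elim: T0 F => [|T0 IH] F h0 hT hs; first by exists 0%N; split => //; lia.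
case: (boolP (-1 <= F 0%N)) => h.
  by exists 0%N; split => //; lia.
have := hs 0%N isT => h1.
have [t [ht1 ht2]] := IH (fun t => F t.+1) ltac:(lia) hT (fun t ht => hs t.+1 ht).
by exists t.+1.
Qed.

Section Construct.
Variables (T : finType) (e : rel T).
Hypothesis esym : forall x y, e x y = e y x.
Hypothesis eirr : forall x, ~~ e x x.
Hypothesis econn : forall x y, connect e x y.
Hypothesis ecount : (#|edge_set e| = #|T| - 1)%N.
Hypothesis hasnb : forall v, exists w, e v w.
Variable r : T.

Let rho v : int := (dist econn r v)%:Z.
Let Dsum : nat := \sum_v dist econn r v.
Let nn : int := #|T|%:Z.
Let K v : int := rho v * nn + (enum_rank v : nat)%:Z + 1.
Let M : int := nn * (Dsum%:Z + 1) + 1.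
Let sig (N : int) v : int := rho v + ((N - K v) %/ M)%Z.
Let E (N : int) v : int := clamp (sig N v).
Let hg v : int := - rho v.
Let hf (N : int) v : int := - rho v + 2 * E N v.

Lemma rho_bnd (v : T) : 0 <= rho v <= Dsum%:Z.
Proof.
rewrite /rho /Dsum (bigD1 v) //=; lia.
Qed.

Lemma rank_bnd (v : T) : 0 <= (enum_rank v : nat)%:Z < nn.
Proof. have h : (enum_rank v < #|T|)%N := ltn_ord (enum_rank v). rewrite /nn; lia. Qed.

Lemma K_bnd (v : T) : 1 <= K v < M.
Proof. have := rho_bnd v; have := rank_bnd v; rewrite /K /M; nia. Qed.

Lemma K_mono (a b : T) : rho a < rho b -> K a < K b.
Proof. have := rank_bnd a; have := rank_bnd b; rewrite /K; nia. Qed.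

Lemma K_inj (a b : T) : K a = K b -> a = b.
Proof.
move=> h.
have hr : rho a = rho b.
  case: (ltrgtP (rho a) (rho b)) => // hab.
  + by have := K_mono hab; rewrite h ltxx.
  + by have := K_mono hab; rewrite h ltxx.
have : (enum_rank a : nat) = enum_rank b by move: h; rewrite /K hr; lia.
by move/val_inj/enum_rank_inj.
Qed.

Lemma sig_edge (N : int) (a b : T) : rho b = rho a + 1 -> 0 <= sig N b - sig N a <= 1.
Proof.
move=> h; have := K_mono (a:=a) (b:=b) ltac:(lia).
have := K_bnd a; have := K_bnd b => h1 h2 h3.
have := div_step (M:=M) (a := N - K b) (b := N - K a) ltac:(lia) ltac:(lia).
rewrite /sig; lia.
Qed.

Lemma E_edge (N : int) (a b : T) : rho b = rho a + 1 -> 0 <= E N b - E N a <= 1.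
Proof. move=> h; apply: clamp_lip; exact: sig_edge. Qed.

Lemma rho_edge a b : e a b -> rho b = rho a + 1 \/ rho a = rho b + 1.
Proof. move=> h; have := dist_edge2 esym econn ecount r h; rewrite /rho; lia. Qed.

Definition gcol := [ffun v => zcol (hg v)].
Definition fcol (N : int) := [ffun v => zcol (hf N v)].

Lemma hgt_g : hgt e gcol hg.
Proof.
split=> [v|a b h]; first by rewrite ffunE.
have := rho_edge h; rewrite /hg; lia.
Qed.

Lemma hgt_f (N : int) : hgt e (fcol N) (hf N).
Proof.
split=> [v|a b h]; first by rewrite ffunE.
case: (rho_edge h) => h'.
  have := E_edge N h'; rewrite /hf; lia.
have := E_edge N h'; rewrite /hf; lia.
Qed.

Definition Del (N : int) := \sum_v (`|E N v| - `|E N v - 3|).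

Lemma far_bound (N : int) k : walk e k (fcol N) gcol -> E N r = -1 -> -1 <= Del N <= 1 ->
  ((3 * #|T|)./2 < k)%N.
Proof.
move=> w Er hD.
have [c [par sm]] := walk_bound esym eirr hasnb econn w (hgt_f N) hgt_g.
have c2 : (c %% 2)%Z = 0.
  have := par r; rewrite /hg /hf Er; lia.
pose j := (c %/ 2)%Z.
have pt v : `|hg v + 3 * c - hf N v| = 2 * `|E N v - 3 * j|.
  rewrite /hg /hf /j; lia.
have sm2 : \sum_v `|E N v - 3 * j| <= k%:Z.
  move: sm; under eq_bigr => v _ do rewrite pt.
  by rewrite -mulr_sumr ler_pM2l.
have bE v : -1 <= E N v <= 4 by apply: clamp_bnd.
have S01 : 3 * nn + 2 <= \sum_v `|E N v| + \sum_v `|E N v - 3|.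
  rewrite -big_split /=.
  apply: le_trans (_ : \sum_v (3 + (if v == r then 2 else 0)) <= _).
    rewrite big_split /= sumr_const (bigD1 r) //= eqxx big1 => [|v /negbTE ->//].
    rewrite /nn -mulr_natr natz (_ : #|xpredT| = #|T|) //; lia.
  apply: ler_sum => v _; have := bE v; case: (eqVneq v r) => [->|_]; rewrite ?Er; lia.
have hD' : Del N = \sum_v `|E N v| - \sum_v `|E N v - 3|.
  by rewrite /Del sumrB.
have Sj : \sum_v `|E N v| <= \sum_v `|E N v - 3 * j| \/
          \sum_v `|E N v - 3| <= \sum_v `|E N v - 3 * j|.
  case: (lerP j 0) => hj; [left|right]; apply: ler_sum => v _; have := bE v; lia.
suff : ((3 * #|T|)./2 + 1)%N%:Z <= k%:Z by lia.
move: hD; rewrite hD'; move: S01 Sj sm2; rewrite /nn; lia.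
Qed.


Lemma sig0 v : sig 0 v = rho v - 1.
Proof. have := K_bnd v; rewrite /sig; nia. Qed.

Lemma E_r N : N <= 0 -> E N r = -1.
Proof.
move=> hN; apply: clamp_low; have := K_bnd r; have := rho_bnd r.
rewrite /sig /rho dist_rr; nia.
Qed.

Let Nlow : int := - (M * (Dsum%:Z + 2)).

Lemma E_low v : E Nlow v = -1.
Proof.
apply: clamp_low; have := K_bnd v; have := rho_bnd v; rewrite /sig /Nlow; nia.
Qed.

Lemma sig_succ N v : 0 <= sig (N + 1) v - sig N v <= 1.
Proof.
have := K_bnd v => h.
have := div_step (M:=M) (a := N - K v) (b := N + 1 - K v) ltac:(lia) ltac:(lia).
rewrite /sig; lia.
Qed.

Lemma sig_same N v : ((N + 1 - K v) %% M)%Z != 0 -> sig (N + 1) v = sig N v.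
Proof.
have := K_bnd v => h hm; rewrite /sig.
have := divz_eq (N - K v) M; have := divz_eq (N + 1 - K v) M.
have := modz_ge0 (N - K v) (lt0r_neq0 (_ : 0 < M)).
move: hm; nia.
Qed.

Lemma K_mod_uniq N a b : ((N + 1 - K a) %% M)%Z = 0 -> ((N + 1 - K b) %% M)%Z = 0 -> a = b.
Proof.
move=> h1 h2; apply: K_inj; have := K_bnd a; have := K_bnd b.
have := divz_eq (N + 1 - K a) M; have := divz_eq (N + 1 - K b) M.
rewrite h1 h2 !addr0; set qa := ((N + 1 - K a) %/ M)%Z; set qb := ((N + 1 - K b) %/ M)%Z.
move=> Eb Ea hb ha; have hq : (qb - qa) * M = K a - K b by lia.
case: (ltrgtP (qb - qa) 0) => hs; nia.
Qed.

Lemma Del_step N : 0 <= Del (N + 1) - Del N <= 2.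
Proof.
rewrite /Del -sumrB.
have bd v : 0 <= (`|E (N + 1) v| - `|E (N + 1) v - 3|) - (`|E N v| - `|E N v - 3|) <= 2.
  have := clamp_lip (sig_succ N v); have := clamp_bnd (sig (N + 1) v); have := clamp_bnd (sig N v).
  rewrite /E; lia.
have z v : ((N + 1 - K v) %% M)%Z != 0 ->
    (`|E (N + 1) v| - `|E (N + 1) v - 3|) - (`|E N v| - `|E N v - 3|) = 0.
  by move=> hv; rewrite /E sig_same // subrr.
case: (pickP (fun v => ((N + 1 - K v) %% M)%Z == 0)) => [v0 /eqP h0|H].
  rewrite (bigD1 v0) //= big1 => [|v nv]; first by rewrite addr0; apply: bd.
  apply: z; apply/eqP => hv; move/eqP: nv; apply; exact: K_mod_uniq hv h0.
rewrite big1 // => v _; apply: z; by rewrite H.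
Qed.

Lemma find_N : -1 <= Del 0 -> exists N, N <= 0 /\ -1 <= Del N <= 1.
Proof.
move=> h0.
have hl : Nlow <= 0 by have := K_bnd r; have := rho_bnd r; rewrite /Nlow; nia.
pose F := fun t : nat => Del (Nlow + t%:Z).
have H1 : F 0%N <= 1.
  rewrite /F addr0 /Del; under eq_bigr => v _ do rewrite E_low.
  rewrite sumr_const -mulr_natr natz; lia.
have H2 : -1 <= F (absz Nlow).
  by rewrite /F (_ : Nlow + (absz Nlow)%:Z = 0) //; lia.
have H3 : forall t, (t < absz Nlow)%N -> 0 <= F t.+1 - F t <= 2.
  move=> t _; have := Del_step (Nlow + t%:Z); rewrite /F.
  by rewrite (_ : Nlow + t.+1%:Z = Nlow + t%:Z + 1) //; lia.
have [t [ht1 ht2]] := ivt H1 H2 H3.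
exists (Nlow + t%:Z); split => //; lia.
Qed.

Definition Sball := (\sum_v ((dist econn r v <= 1) + (dist econn r v <= 2) + (dist econn r v <= 3)))%N.

Lemma Del0 : Del 0 = 3 * nn - 2 * (Sball%:Z).
Proof.
have pt v : `|E 0 v| - `|E 0 v - 3| =
    3 - 2 * ((dist econn r v <= 1) + (dist econn r v <= 2) + (dist econn r v <= 3))%N%:Z.
  rewrite /E sig0 /rho; case: (dist econn r v) => [|[|[|[|d]]]]; rewrite /clamp //=.
  by case: ifP => _; lia.
rewrite /Del; under eq_bigr => v _ do rewrite pt.
rewrite sumrB sumr_const -mulr_sumr /Sball.
rewrite (big_morph Posz PoszD (erefl _)) /nn (_ : #|xpredT| = #|T|) //.
by rewrite (mulz3 #|T|).
Qed.

Lemma far : (2 * Sball <= 3 * #|T| + 1)%N ->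
  exists f g, [/\ proper3 e f, proper3 e g & forall k, walk e k f g -> ((3 * #|T|)./2 < k)%N].
Proof.
move=> hS.
have [N [hN hD]] : exists N, N <= 0 /\ -1 <= Del N <= 1.
  apply: find_N; rewrite Del0 /nn; lia.
exists (fcol N), gcol; split.
- exact: hgt_proper (hgt_f N).
- exact: hgt_proper hgt_g.
- move=> k w; exact: far_bound w (E_r hN) hD.
Qed.

End Construct.

End M5.
Import M5.

Module M6.

Section Comb.
Variables (T : finType) (e : rel T).
Hypothesis esym : forall x y, e x y = e y x.
Hypothesis eirr : forall x, ~~ e x x.
Hypothesis econn : forall x y, connect e x y.
Hypothesis ecount : #|edge_set e| = #|T| - 1.

Local Notation d := (dist econn).

Lemma Lneq r a b : e a b -> d r a != d r b.
Proof. exact: dist_neq. Qed.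

Lemma Luniq r v w1 w2 : e w1 v -> e w2 v -> d r w1 < d r v -> d r w2 < d r v -> w1 = w2.
Proof. exact: closer_uniq. Qed.

Lemma Ledge r w v : e w v -> d r v <= (d r w).+1.
Proof. exact: dist_edge. Qed.

Lemma Ladj r v : e r v -> d r v = 1.
Proof. exact: dist_adj. Qed.

Lemma Lle1 r v : d r v <= 1 -> (r == v) || e r v.
Proof. exact: dist_le1. Qed.

Lemma Ld0 r v : (d r v == 0) = (r == v).
Proof. exact: dist0. Qed.

Lemma Lsym r v : d r v = d v r.
Proof. exact: dist_sym. Qed.

Lemma Ltri a b c : d a c <= d a b + d b c.
Proof. exact: dist_tri. Qed.

Lemma Ledge2 r a b : e a b -> d r b = (d r a).+1 \/ d r a = (d r b).+1.
Proof. exact: dist_edge2. Qed.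

Lemma hasnb : 2 <= #|T| -> forall v, exists w, e v w.
Proof.
move=> h2 v.
have [u hu] : exists u, u != v.
  case: (pickP (fun u => u != v)) => [u hu|H]; first by exists u.
  move: h2; rewrite (cardD1 v) (eq_card0 (A := [predD1 T & v])) // => u /=.
  by rewrite inE H.
have [w h1 _] := dist_closer econn hu; exists w; by rewrite esym.
Qed.

Definition leafb x := [forall w1, forall w2, (e x w1 && e x w2) ==> (w1 == w2)].

Lemma leafP x w1 w2 : leafb x -> e x w1 -> e x w2 -> w1 = w2.
Proof. by move=> /forallP /(_ w1) /forallP /(_ w2) /implyP H h1 h2; apply/eqP/H; rewrite h1. Qed.

Lemma farther r u : ~~ leafb u -> exists w, e u w /\ d r w = (d r u).+1.
Proof.
move=> /forallPn [w1 /forallPn [w2]]; rewrite negb_imply => /andP [/andP [h1 h2] ne].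
case: (Ledge2 r h1) => a; first by exists w1.
case: (Ledge2 r h2) => b; first by exists w2.
have := Luniq (r:=r) (v:=u) (w1:=w1) (w2:=w2); rewrite !(esym _ u) => H.
have E := H h1 h2 ltac:(rewrite a; lia) ltac:(rewrite b; lia).
by move: ne; rewrite E eqxx.
Qed.

Lemma walk_away r : forall k u, #|[set v | d r u < d r v]| <= k ->
  exists2 x, leafb x & d r u <= d r x.
Proof.
elim=> [|k IH] u hk; case: (boolP (leafb u)) => [lu|nl]; try by exists u.
  have [w [_ hw2]] := farther r nl.
  have win : w \in [set v | d r u < d r v] by rewrite inE hw2.
  by move: hk; rewrite leqn0 => /eqP /cards0_eq E; rewrite E inE in win.
have [w [_ hw2]] := farther r nl.
have sub : [set v | d r w < d r v] \proper [set v | d r u < d r v].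
  apply/properP; split.
    by apply/subsetP => z; rewrite !inE hw2 => /ltnW.
  by exists w; rewrite inE ?hw2 ?ltnn.
have [x lx hx] := IH w (ltnSE (leq_trans (proper_card sub) hk)).
by exists x => //; rewrite (leq_trans _ hx) // hw2.
Qed.

Lemma leaf_dist x p : leafb x -> e x p -> forall m z, d x z = m.+1 -> d p z <= m.
Proof.
move=> lx hp; elim=> [|m IH] z hz.
  have xz : x != z by rewrite -Ld0 hz.
  have [w hw1 hw2] := dist_closer econn xz.
  move: hw2; rewrite hz => /eqP; rewrite eqSS Ld0 => /eqP E; subst w.
  by rewrite (leafP lx hw1 hp) dist_rr.
have xz : x != z by rewrite -Ld0 hz.
have [w hw1 hw2] := dist_closer econn xz.
move: hw2; rewrite hz => /eqP; rewrite eqSS => /eqP hw.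
by have := IH _ hw; have := Ledge p hw1; lia.
Qed.

Lemma leaf_le x p k z : leafb x -> e x p -> 1 <= k -> d x z <= k.+1 -> d p z <= k.
Proof.
move=> lx hp hk hz; case: (eqVneq x z) => [<-|xz].
  by rewrite Lsym Ladj.
case E: (d x z) => [|m]; first by move: E xz => /eqP; rewrite Ld0 => ->.
have := leaf_dist lx hp E; rewrite E in hz; lia.
Qed.

Lemma leaf_le1 x p z : leafb x -> e x p -> d x z <= 1 -> (z == x) || (z == p).
Proof.
move=> lx hp hz; case: (eqVneq x z) => [E|xz] //.
case E: (d x z) => [|m]; first by move: E xz => /eqP; rewrite Ld0 => ->.
have := leaf_dist lx hp E; rewrite E in hz; have -> : m = 0 by lia.
by rewrite leqn0 Ld0 eq_sym orbC => ->.
Qed.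

Lemma leq_b (b1 b2 : bool) : (b1 -> b2) -> (b1 <= b2)%N.
Proof. by case: b1; case: b2 => //= /(_ isT). Qed.

Lemma leq_b2 (b c1 c2 : bool) : (b -> c1 || c2) -> (b <= c1 + c2)%N.
Proof. by case: b; case: c1; case: c2 => //= /(_ isT). Qed.

Lemma sum_eq1 (a : T) : \sum_(z : T) (z == a) = 1.
Proof. by rewrite (bigD1 a) //= eqxx big1 // => z /negbTE ->. Qed.

Lemma sum_one : \sum_(z : T) 1 = #|T|.
Proof. by rewrite sum1_card. Qed.

Lemma inter_bnd p q z : p != q -> 2 <= d q p ->
  (d p z <= 1) + (d q z <= 2) <= 1 + (z == p) + (z == par econn q p).
Proof.
move=> pq hq.
case: (boolP (d p z <= 1)) => h1; case: (boolP (d q z <= 2)) => h2 //=; try lia.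
case/orP: (Lle1 h1) => [/eqP <-|hpz]; first by rewrite eqxx.
have [hc1 hc2] := par_spec econn (r:=q) (v:=p) (ltac:(by rewrite eq_sym)).
have := Lneq q hpz => ne.
have lt : d q z < d q p by move: ne h2 hq; lia.
have := Luniq (r:=q) (v:=p) (w1:=z) (w2:=par econn q p); rewrite esym => H.
by rewrite (H hpz hc1 lt hc2) eqxx; lia.
Qed.

Lemma caseA x y : 7 <= #|T| -> leafb x -> leafb y -> 4 <= d x y ->
  exists r, 2 * Sball econn r <= 3 * #|T| + 1.
Proof.
move=> h7 lx ly hxy.
have nb := hasnb (ltac:(lia)).
have [p hp] := nb x; have [q hq] := nb y.
have dqp : 2 <= d q p.
  rewrite leqNgt; apply/negP => h.
  have := Lle1 (r:=q) (v:=p) ltac:(lia) => /orP [/eqP E|eqp].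
    subst q; have := Ledge x (w:=p) (v:=y); rewrite esym => H.
    have := H hq; rewrite (Ladj hp); lia.
  have h1 := Ledge x (w:=p) (v:=q); rewrite esym in h1; have := h1 eqp.
  have h2 := Ledge x (w:=q) (v:=y); rewrite esym in h2; have := h2 hq.
  rewrite (Ladj hp); lia.
have dpq : 2 <= d p q by rewrite Lsym.
have pq : p != q by apply/eqP => E; move: dqp; rewrite E dist_rr.
have Sx : Sball econn x <= 2 + \sum_z (d p z <= 1) + \sum_z (d p z <= 2).
  suff : Sball econn x <= \sum_z (((z == x) + (z == p)) + (d p z <= 1) + (d p z <= 2)).
    by rewrite !big_split /= !sum_eq1.
  apply: leq_sum => z _; apply: leq_add; first apply: leq_add.
  - apply: leq_b2; exact: leaf_le1.
  - apply: leq_b; exact: leaf_le.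
  - apply: leq_b; exact: leaf_le.
have Sy : Sball econn y <= 2 + \sum_z (d q z <= 1) + \sum_z (d q z <= 2).
  suff : Sball econn y <= \sum_z (((z == y) + (z == q)) + (d q z <= 1) + (d q z <= 2)).
    by rewrite !big_split /= !sum_eq1.
  apply: leq_sum => z _; apply: leq_add; first apply: leq_add.
  - apply: leq_b2; exact: leaf_le1.
  - apply: leq_b; exact: leaf_le.
  - apply: leq_b; exact: leaf_le.
have I1 : \sum_z (d p z <= 1) + \sum_z (d q z <= 2) <= #|T| + 2.
  suff : \sum_z ((d p z <= 1) + (d q z <= 2)) <= \sum_z (1 + (z == p) + (z == par econn q p)).
    rewrite !big_split /= sum_one !sum_eq1; move=> h; apply: (leq_trans h); by rewrite -addnA.
  apply: leq_sum => z _; exact: inter_bnd.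
have I2 : \sum_z (d q z <= 1) + \sum_z (d p z <= 2) <= #|T| + 2.
  suff : \sum_z ((d q z <= 1) + (d p z <= 2)) <= \sum_z (1 + (z == q) + (z == par econn p q)).
    rewrite !big_split /= sum_one !sum_eq1; move=> h; apply: (leq_trans h); by rewrite -addnA.
  apply: leq_sum => z _; apply: inter_bnd => //; by rewrite eq_sym.
case: (leqP (Sball econn x) (Sball econn y)) => h.
  by exists x; lia.
by exists y; lia.
Qed.



Lemma card_pred (P : pred T) : #|[set z | P z]| = \sum_z P z.
Proof. rewrite -sum1_card big_mkcond /=; apply: eq_bigr => z _; rewrite inE; by case: (P z). Qed.

Lemma get_leaf : 1 <= #|T| -> exists x, leafb x.
Proof.
move=> h; have [v0 _] : exists v0 : T, true.
  case: (pickP (fun _ : T => true)) => [v _|H]; first by exists v.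
  by move: h; rewrite (eq_card0 (A := T)) // => v; rewrite H.
have [x lx _] := walk_away (r:=v0) (k:=#|T|) (u:=v0) (max_card _); by exists x.
Qed.

Lemma star_case : 2 <= #|T| -> (forall u v, d u v <= 2) -> is_star e.
Proof.
move=> h2 hd; have [x lx] := get_leaf (ltac:(lia)).
have [c hc] := hasnb h2 x.
have adj z : z != c -> e c z.
  move=> zc; case: (eqVneq z x) => [->|zx]; first by rewrite esym.
  have := leaf_le lx hc (k := 1) (z := z) isT (hd x z) => /Lle1 /orP [/eqP E|//].
  by move: zc; rewrite E eqxx.
exists c => a b.
case: (eqVneq a c) => [->|ac]; case: (eqVneq b c) => [->|bc] /=.
- by rewrite (negbTE (eirr c)).
- by rewrite adj.
- by rewrite esym adj.
- apply/negP => hab; have := Lneq c hab; by rewrite !Ladj ?adj.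
Qed.

Lemma dstar_facts x y u v : leafb x -> leafb y -> e x u -> e y v -> d x y = 3 ->
  (forall a b, d a b <= 3) ->
  [/\ u != v, e u v, (forall z, z != u -> z != v -> e u z != e v z)
    & (forall z z', z != u -> z != v -> z' != u -> z' != v -> ~~ e z z')].
Proof.
move=> lx ly hu hv hxy hd.
have duy : d u y = 2.
  have := leaf_le lx hu (k := 2) (z := y) isT (hd x y); have := Ltri x u y.
  rewrite (Ladj hu); lia.
have euv : e u v.
  have yu : y != u by rewrite -Ld0 Lsym duy.
  have [w hw1 hw2] := dist_closer econn yu.
  move: hw2; rewrite (Lsym y u) duy => /eqP; rewrite eqSS => /eqP hw.
  have := Lle1 (r:=y) (v:=w) ltac:(lia) => /orP [/eqP E|hyw].
    by move: hw; rewrite -E dist_rr.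
  by rewrite esym -(leafP ly hyw hv).
have uv : u != v by apply/eqP => E; move: euv; rewrite E (negbTE (eirr v)).
have eu_d z : z != u -> e u z = (d u z == 1).
  move=> zu; apply/idP/idP => [h|/eqP h]; first by rewrite Ladj.
  have := Lle1 (r:=u) (v:=z) ltac:(lia) => /orP [/eqP E|//].
  by move: zu; rewrite E eqxx.
have ev_d z : z != v -> e v z = (d v z == 1).
  move=> zv; apply/idP/idP => [h|/eqP h]; first by rewrite Ladj.
  have := Lle1 (r:=v) (v:=z) ltac:(lia) => /orP [/eqP E|//].
  by move: zv; rewrite E eqxx.
have xor z : z != u -> z != v -> e u z != e v z.
  move=> zu zv.
  have du := leaf_le lx hu (k := 2) (z := z) isT (hd x z).
  have dv := leaf_le ly hv (k := 2) (z := z) isT (hd y z).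
  have := Lneq z euv; rewrite (Lsym z u) (Lsym z v) => ne.
  have nu : d u z != 0 by rewrite Ld0 eq_sym.
  have nv : d v z != 0 by rewrite Ld0 eq_sym.
  rewrite (eu_d _ zu) (ev_d _ zv).
  have [[-> ->]|[-> ->]] : (d u z = 1 /\ d v z = 2) \/ (d u z = 2 /\ d v z = 1) by lia.
  + by [].
  + by [].
split => // z z' zu zv z'u z'v; apply/negP => hzz.
have X := xor _ zu zv; have X' := xor _ z'u z'v.
case: (boolP (e u z)) X => hz X; case: (boolP (e u z')) X' => hz' X'.
- by have := Lneq u hzz; rewrite !Ladj.
- have hv' : e v z' by move: X'; case: (e v z').
  have du' : d u z' = 2.
    have := leaf_le lx hu (k := 2) (z := z') isT (hd x z').
    move: hz'; rewrite (eu_d _ z'u); have : d u z' != 0 by rewrite Ld0 eq_sym.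
    by case: (d u z') => [|[|[|m]]].
  have := Luniq (r:=u) (v:=z') (w1:=z) (w2:=v) hzz hv'.
  by rewrite (Ladj hz) (Ladj euv) du' => /(_ isT isT) E; move: zv; rewrite E eqxx.
- have hv' : e v z by move: X; case: (e v z).
  have du' : d u z = 2.
    have := leaf_le lx hu (k := 2) (z := z) isT (hd x z).
    move: hz; rewrite (eu_d _ zu); have : d u z != 0 by rewrite Ld0 eq_sym.
    by case: (d u z) => [|[|[|m]]].
  have := Luniq (r:=u) (v:=z) (w1:=z') (w2:=v); rewrite (esym z' z) => H.
  have := H hzz hv'; rewrite (Ladj hz') (Ladj euv) du' => /(_ isT isT) E.
  by move: z'v; rewrite E eqxx.
- have hv1 : e v z by move: X; case: (e v z).
  have hv2 : e v z' by move: X'; case: (e v z').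
  by have := Lneq v hzz; rewrite !Ladj.
Qed.

End Comb.

End M6.
Import M6.

Module M7.

Lemma leq_b3 (b c1 c2 c3 : bool) : (b -> [|| c1, c2 | c3]) -> (b <= c1 + c2 + c3)%N.
Proof. by case: b; case: c1; case: c2; case: c3 => //= /(_ isT). Qed.

Section DS.
Variables (T : finType) (e : rel T).
Hypothesis esym : forall x y, e x y = e y x.
Hypothesis eirr : forall x, ~~ e x x.
Hypothesis econn : forall x y, connect e x y.
Hypothesis ecount : #|edge_set e| = #|T| - 1.
Local Notation d := (dist econn).

Variables (u v : T).
Hypothesis uv : u != v.
Hypothesis euv : e u v.
Hypothesis xor : forall z, z != u -> z != v -> e u z != e v z.
Hypothesis noe : forall z z', z != u -> z != v -> z' != u -> z' != v -> ~~ e z z'.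

Definition Aset := [set z | [&& z != u, z != v & e u z]].
Definition Bset := [set z | [&& z != u, z != v & ~~ e u z]].

Lemma evz z : z != u -> z != v -> e v z = ~~ e u z.
Proof. by move=> a b; move: (xor a b); case: (e u z); case: (e v z). Qed.

Lemma ds_is : is_double_star e #|Aset| #|Bset|.
Proof.
exists u, v, (e u); split => // a b.
have vu : v != u by rewrite eq_sym.
case: (eqVneq a u) => [->|au]; case: (eqVneq b u) => [->|bu];
  case: (eqVneq a v) => [av|av]; case: (eqVneq b v) => [bv|bv] //=.
all: try (subst; rewrite ?eqxx ?(negbTE uv) ?(negbTE vu) ?(negbTE (eirr _)) //=; done).
all: try subst.
all: rewrite ?eqxx ?(negbTE uv) ?(negbTE vu) ?(negbTE (eirr _)) ?andbT ?andbF ?orbF ?orbT //=.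
all: try (by rewrite esym).
all: try (by rewrite evz).
all: try (by rewrite esym evz).
all: try (by apply/negbTE; apply: noe).
Qed.

Lemma card_split : #|T| = #|Aset| + #|Bset| + 2.
Proof.
suff : \sum_(z : T) 1 = \sum_z (((z == u) + (z == v)) + ([&& z != u, z != v & e u z] + [&& z != u, z != v & ~~ e u z])).
  rewrite sum_one !big_split /= !sum_eq1 /Aset /Bset !card_pred => ->; lia.
apply: eq_bigr => z _.
have vu : v != u by rewrite eq_sym.
case: (eqVneq z u) => [E|zu]; first by subst z; rewrite ?eqxx ?(negbTE uv).
case: (eqVneq z v) => [E|zv]; first by subst z; rewrite ?eqxx ?(negbTE vu).
by rewrite ?(negbTE zu) ?(negbTE zv) /=; case: (e u z).
Qed.

Lemma bal x : leafb e x -> e x u -> #|Aset| + 5 <= #|Bset| -> 2 * Sball econn x <= 3 * #|T| + 1.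
Proof.
move=> lx hx hab.
have S : Sball econn x <= \sum_z (((z == x) + (z == u)) + ((z == u) + (z == v) + (z \in Aset)) + 1).
  apply: leq_sum => z _; apply: leq_add; first apply: leq_add.
  - apply: leq_b2; exact: (leaf_le1 ecount lx hx).
  - apply: leq_b3 => h; have := leaf_le esym eirr ecount (k := 1) (z := z) lx hx isT h.
    move=> /dist_le1 /orP [/eqP <-|h2]; first by rewrite eqxx.
    case: (eqVneq z v) => [_|zv]; first by rewrite orbT.
    case: (eqVneq z u) => [_|zu] //.
    by rewrite /Aset inE zu zv h2 !orbT.
  - by case: (_ <= 3).
move: S; rewrite !big_split /= !sum_eq1 sum_one -card_pred -/Aset (_ : [set z | z \in Aset] = Aset); last by apply/setP => z; rewrite inE.
have H := card_split. rewrite {1 2}H. lia.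
Qed.

End DS.

End M7.
Import M7.


Theorem mainTheorem16 (n : nat) (T : finType) (e : rel T) :
  7 <= n -> #|T| = n -> is_tree e ->
  col_diam_eq e ((3 * n)./2) ->
  is_star e \/
  exists a b, [/\ 1 <= a, 1 <= b, a + b + 2 = n,
                  a <= b + 4 & b <= a + 4] /\ is_double_star e a b.
Proof.
move=> h7 hn [[eirr esym] [econn ecount]] [hdiam _].
subst n.
have nb := hasnb esym econn (ltac:(lia) : 2 <= #|T|).
have noR : forall r, ~ (2 * Sball econn r <= 3 * #|T| + 1).
  move=> r hr; have [f [g [pf pg hw]]] := far esym eirr ecount nb hr.
  have [j hj wj] := hdiam f g pf pg; have := hw _ wj; lia.
case: (boolP [exists u, exists v, 3 < dist econn u v]) => [/existsP [u /existsP [v huv]]|hA].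
  have [x lx hx] := walk_away esym ecount (r:=v) (k:=#|T|) (u:=u) (max_card _).
  have [y ly hy] := walk_away esym ecount (r:=x) (k:=#|T|) (u:=v) (max_card _).
  have hxy : 4 <= dist econn x y.
    move: huv hx hy; rewrite (dist_sym esym econn u v) (dist_sym esym econn v x); lia.
  have [r hr] := caseA esym eirr ecount h7 lx ly hxy.
  by case: (noR r).
have hd3 : forall a b, dist econn a b <= 3.
  move=> a b; move: hA => /existsPn /(_ a) /existsPn /(_ b); lia.
case: (boolP [exists u, exists v, dist econn u v == 3]) => [/existsP [u /existsP [v /eqP huv]]|hB]; last first.
  left; apply: (star_case esym eirr ecount (ltac:(lia))) => a b.
  move: hB => /existsPn /(_ a) /existsPn /(_ b); have := hd3 a b; lia.
right.
have [x lx hx] := walk_away esym ecount (r:=v) (k:=#|T|) (u:=u) (max_card _).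
have [y ly hy] := walk_away esym ecount (r:=x) (k:=#|T|) (u:=v) (max_card _).
have hxy : dist econn x y = 3.
  have := hd3 x y; move: huv hx hy; rewrite (dist_sym esym econn u v) (dist_sym esym econn v x); lia.
have [p hp] := nb x; have [q hq] := nb y.
have [pq epq xor noe] := dstar_facts esym eirr ecount lx ly hp hq hxy hd3.
have qp : q != p by rewrite eq_sym.
have eqp : e q p by rewrite esym.
have xorq : forall z, z != q -> z != p -> e q z != e p z.
  by move=> z a b; rewrite eq_sym; apply: xor.
have cA : #|Aset e q p| = #|Bset e p q|.
  apply: eq_card => z; rewrite !inE.
  case: (boolP (z == p)) => zp; case: (boolP (z == q)) => zq //=.
  by rewrite (evz xor zp zq).
have cB : #|Bset e q p| = #|Aset e p q|.
  apply: eq_card => z; rewrite !inE.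
  case: (boolP (z == p)) => zp; case: (boolP (z == q)) => zq //=.
  by rewrite (evz xor zp zq) negbK.
have csum := card_split ecount pq epq.
have xA : 0 < #|Aset e p q|.
  apply/card_gt0P; exists x; rewrite inE esym hp andbT.
  apply/andP; split; apply/eqP => E; subst.
  - by move: hp; rewrite (negbTE (eirr _)).
  - by move: hxy; rewrite (dist_adj eirr econn (v:=y) (r:=q) _) // esym.
have yB : 0 < #|Bset e p q|.
  apply/card_gt0P; exists y; rewrite inE.
  have yp : y != p.
    apply/eqP => E; subst; by move: hxy; rewrite (dist_adj eirr econn (v:=p) (r:=x) _).
  have yq : y != q by apply/eqP => E; subst; move: hq; rewrite (negbTE (eirr _)).
  rewrite yp yq /=; move: (xor _ yp yq); rewrite (esym q y) hq; by case: (e p y).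
exists #|Aset e p q|, #|Bset e p q|; split; last first. exact (ds_is esym eirr pq epq xor noe).
split; try lia.
- rewrite leqNgt; apply/negP => hlt.
  apply: (noR y); apply: (bal esym eirr econn ecount qp eqp ly hq); lia.
- rewrite leqNgt; apply/negP => hlt.
  apply: (noR x); apply: (bal esym eirr econn ecount pq epq lx hp); lia.
Qed.
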